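(* Let $\phi\colon P(\mathbb{R})\to P(\mathbb{R})$ be a surjective isometry with respect to the Kuiper distance, and let $f\colon\mathbb{R}\to\mathbb{R}$ be a bijection such that $\phi(\mu)(\{f(x)\})=\mu(\{x\})$ for all $\mu\in P(\mathbb{R})$ and $x\in\mathbb{R}$ (equivalently, $\phi(\delta_x)=\delta_{f(x)}$ for all $x$). Then $f$ is a homeomorphism of $\mathbb{R}$ (i.e. a monotone bijection).
   Context: $P(\mathbb{R})$ is the set of Borel probability measures on $\mathbb{R}$, with the Kuiper distance $d_{Ku}(\mu,\nu)=\sup\{|\mu(I)-\nu(I)| : I\text{ a non-degenerate interval of }\mathbb{R}\}$. $\delta_x$ denotes the Dirac measure at $x$. *)

(* Defs.v *)
From HB Require Import structures.
From mathcomp Require Import all_boot all_order all_algebra.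
From mathcomp Require Import all_classical all_reals all_analysis.
Set Implicit Arguments. Unset Strict Implicit. Unset Printing Implicit Defensive.
Import Order.TTheory GRing.Theory Num.Theory.
Import numFieldNormedType.Exports.
Local Open Scope classical_set_scope.
Local Open Scope ring_scope.

Definition nondeg_interval (R : realType) (I : set R) : Prop :=
  exists i : interval R, I = [set` i] /\ exists x y : R, x \in i /\ y \in i /\ x < y.

Definition kuiper (R : realType) (mu nu : probability R R) : \bar R :=
  ereal_sup [set `|(mu I - nu I)%E|%E | I in nondeg_interval (R:=R)].

(* Main.v *)
Require Import Defs.
From HB Require Import structures.
From mathcomp Require Import all_boot all_order all_algebra.
From mathcomp Require Import all_classical all_reals all_analysis.
From mathcomp Require Import ring lra.
Import Order.TTheory GRing.Theory Num.Theory.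
Import numFieldNormedType.Exports.
Local Open Scope classical_set_scope.
Local Open Scope ring_scope.


Section pm2.
Context {R : realType} (a b : R).
Definition hh : {nonneg R} := (2^-1)%:nng.
Definition pm2 := measure_add (mscale hh (@dirac _ R a R)) (mscale hh (@dirac _ R b R)).
HB.instance Definition _ := Measure.on pm2.
Lemma pm2E A : pm2 A = ((2^-1) * ((a \in A)%:R + (b \in A)%:R))%:E.
Proof.
rewrite /pm2 measure_addE /mscale /=. rewrite /mscale /= !diracE -EFinM -EFinM -EFinD. congr EFin. by rewrite mulrDr.
Qed.
Let pm2_setT : pm2 setT = 1%E.
Proof. rewrite pm2E !in_setT /=. congr EFin. by field. Qed.
HB.instance Definition _ := Measure_isProbability.Build _ _ _ pm2 pm2_setT.
End pm2.

Lemma atomsE (R : realType) (P : probability R R) (p q : R) (A : set R) :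
  p != q -> P [set p] = (2^-1)%:E -> P [set q] = (2^-1)%:E -> measurable A ->
  P A = (2^-1 * ((p \in A)%:R + (q \in A)%:R))%:E.
Proof.
move=> pq Pp Pq mA.
pose S := [set p] `|` [set q].
have mS : measurable S by apply: measurableU.
have dpq : [set p] `&` [set q] = set0.
  apply/seteqP; split => x //= [-> /eqP]; by rewrite (negbTE pq).
have PS : P S = 1%E.
  rewrite /S measureU //= Pp Pq -EFinD; congr EFin; by field.

have PC : P (~` S) = 0%E by rewrite probability_setC // PS subee.
have PAC : P (A `&` ~` S) = 0%E.
  apply/eqP; rewrite eq_le measure_ge0 andbT -PC.
  apply: le_measure; [apply/mem_set; exact: (measurableI _ _ mA (measurableC mS)) | apply/mem_set; exact: (measurableC mS) | exact: subIsetr].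
have mAS : measurable (A `&` S) := measurableI _ _ mA mS.
have mASc : measurable (A `&` ~` S) := measurableI _ _ mA (measurableC mS).
transitivity (P ((A `&` S) `|` (A `&` ~` S))); first by rewrite -setIUr setUv setIT.
rewrite measureU //; last first.
  - by apply/seteqP; split => x // [[_ Sx] [_ nSx]].

transitivity (P (A `&` S) + 0)%E; first by congr (_ + _)%E.
rewrite adde0 /S setIUr measureU //; last first.
  - apply/seteqP; split => x // [[_ ->] [_ /= /eqP]]; by rewrite (negbTE pq).
  - exact: measurableI.
  - exact: measurableI.
rewrite !setI1.
case: (p \in A); case: (q \in A); rewrite ?measure0 ?add0e ?adde0.
- transitivity ((2^-1 : R)%:E + (2^-1 : R)%:E)%E; first by congr (_ + _)%E.
  by rewrite -EFinD; congr EFin; rewrite /=; field.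
- transitivity ((2^-1 : R)%:E); first exact: Pp.
  by congr EFin; rewrite /=; field.
- transitivity ((2^-1 : R)%:E); first exact: Pq.
  by congr EFin; rewrite /=; field.
- by rewrite /= addr0 mulr0.
Qed.

Definition bt {R : realType} (a b c : R) : Prop := (a < c /\ c < b) \/ (b < c /\ c < a).
Definition Adj {R : realType} (a b c d : R) : Prop :=
  (~ bt a b c /\ ~ bt a b d) \/ (~ bt c d a /\ ~ bt c d b).
Definition D {R : realType} (a b : R) : Prop := a < b \/ b < a.

Lemma D_neq {R : realType} (a b : R) : D a b -> a != b.
Proof. by case=> h; [rewrite lt_eqF | rewrite gt_eqF]. Qed.
Lemma neq_D {R : realType} (a b : R) : a != b -> D a b.
Proof. by rewrite neq_lt => /orP[]; [left|right]. Qed.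

Definition SepPres {R : realType} (g : R -> R) := forall a b c d : R,
  a != b -> c != d -> a != c -> a != d -> b != c -> b != d ->
  (Adj a b c d <-> Adj (g a) (g b) (g c) (g d)).

Section order.
Context {R : realType} (g h : R -> R) (gK : cancel g h) (hK : cancel h g) (SP : SepPres g).

Let ginj : injective g := can_inj gK.
Let Dg a b : D a b -> D (g a) (g b).
Proof. by move=> /D_neq ab; apply: neq_D; rewrite (inj_eq ginj). Qed.

Let SPn a b c d : D a b -> D c d -> D a c -> D a d -> D b c -> D b d ->
  ~ Adj a b c d -> ~ Adj (g a) (g b) (g c) (g d).
Proof.
move=> /D_neq h1 /D_neq h2 /D_neq h3 /D_neq h4 /D_neq h5 /D_neq h6 nA A.
by apply: nA; apply: (proj2 (SP _ _ _ _ h1 h2 h3 h4 h5 h6)).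
Qed.
Let SPp a b c d : D a b -> D c d -> D a c -> D a d -> D b c -> D b d ->
  Adj a b c d -> Adj (g a) (g b) (g c) (g d).
Proof.
move=> /D_neq h1 /D_neq h2 /D_neq h3 /D_neq h4 /D_neq h5 /D_neq h6 A.
exact: (proj1 (SP _ _ _ _ h1 h2 h3 h4 h5 h6)).
Qed.

Ltac solv := rewrite /D /Adj /bt; lra.

Lemma core x y z : x < y -> y < z -> g x < g z -> bt (g x) (g z) (g y).
Proof.
move=> xy yz gxz; have [//|nb] := pselect (bt (g x) (g z) (g y)); exfalso.
have Dxy : D (g x) (g y) by apply: Dg; solv.
have Dzy : D (g z) (g y) by apply: Dg; solv.
have F1 : forall w, z < w -> g x < g w /\ g w < g z.
  move=> w zw; have : ~ Adj (g x) (g z) (g y) (g w) by apply: SPn; solv.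
  move: nb; rewrite /Adj /bt; lra.
have F2 : forall u, u < x -> g x < g u /\ g u < g z.
  move=> u ux; have : ~ Adj (g x) (g z) (g y) (g u) by apply: SPn; solv.
  move: nb; rewrite /Adj /bt; lra.
have F3 : forall u w, u < x -> z < w -> g u < g w.
  move=> u w ux zw; have : ~ Adj (g x) (g w) (g z) (g u) by apply: SPn; solv.
  move: (F1 _ zw) (F2 _ ux); rewrite /Adj /bt; lra.
have F4 : forall u1 u2, u1 < u2 -> u2 < x -> g u2 < g u1.
  move=> u1 u2 u12 u2x; have : ~ Adj (g u2) (g z) (g x) (g u1) by apply: SPn; solv.
  move: (F2 _ u2x) (F2 u1 ltac:(lra)); rewrite /Adj /bt; lra.
have F5 : forall w1 w2, z < w1 -> w1 < w2 -> g w2 < g w1.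
  move=> w1 w2 zw1 w12; have : ~ Adj (g x) (g w1) (g z) (g w2) by apply: SPn; solv.
  move: (F1 _ zw1) (F1 w2 ltac:(lra)); rewrite /Adj /bt; lra.
have F6 : forall v, g x < v -> v < g z -> h v < x \/ z < h v.
  move=> v v1 v2; set t := h v; have gt : g t = v by rewrite /t hK.
  have [tx|xt] := ltP t x; first by left.
  have [zt|tz] := ltP z t; first by right.
  exfalso.
  have [ty|yt|ty] := ltgtP t y.
  - have tx' : x < t.
      rewrite lt_neqAle xt andbT; apply/negP => /eqP tx'.
      by move: v1; rewrite -gt -tx' ltxx.
    have : Adj (g x) (g z) (g y) (g t) by apply: SPp; solv.
    move: nb Dxy Dzy; rewrite gt /Adj /bt /D; lra.
  - have tz' : t < z.
      rewrite lt_neqAle tz andbT; apply/negP => /eqP tz'.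
      by move: v2; rewrite -gt tz' ltxx.
    have : Adj (g x) (g z) (g y) (g t) by apply: SPp; solv.
    move: nb Dxy Dzy; rewrite gt /Adj /bt /D; lra.
  - by apply: nb; rewrite -ty gt; left.
pose S := [set g u | u in [set u | u < x]].
have S0 : S !=set0 by exists (g (x - 1)), (x - 1) => //=; lra.
have Sub : ubound S (g (z + 1)).
  move=> _ [u /= ux <-]; apply/ltW/F3 => //; lra.
have hS : has_ubound S by exists (g (z + 1)).
set c := sup S.
have c1 : g (x - 1) <= c by apply: ub_le_sup => //; exists (x - 1) => //=; lra.
have c2 : c <= g (z + 1) by apply: ge_sup.
have := F2 (x - 1) ltac:(lra); have := F1 (z + 1) ltac:(lra) => Fa Fb.
have [hc|hc] := F6 c ltac:(lra) ltac:(lra).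
- have := F4 (h c - 1) (h c) ltac:(lra) hc; rewrite hK => lt1.
  have : g (h c - 1) <= c by apply: ub_le_sup => //; exists (h c - 1) => //=; lra.
  lra.
- have := F5 (h c) (h c + 1) hc ltac:(lra); rewrite hK => lt1.
  have : c <= g (h c + 1).
    apply: ge_sup => // _ [u /= ux <-]; apply/ltW/F3 => //; lra.
  lra.
Qed.
End order.


Section order2.
Context {R : realType} (g h : R -> R) (gK : cancel g h) (hK : cancel h g) (SP : SepPres g).

Lemma btw x y z : x < y -> y < z -> bt (g x) (g z) (g y).
Proof.
move=> xy yz.
have ginj : injective g := can_inj gK.
have : g x != g z by rewrite (inj_eq ginj) lt_eqF //; lra.
rewrite neq_lt => /orP[gxz|gzx]; first exact: (core _ _ gK hK SP _ _ _ xy yz gxz).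
have gK' : cancel (fun t => - g t) (fun t => h (- t)) by move=> t /=; rewrite opprK gK.
have hK' : cancel (fun t => h (- t)) (fun t => - g t) by move=> t /=; rewrite hK opprK.
have SP' : SepPres (fun t => - g t).
  move=> a b c d h1 h2 h3 h4 h5 h6; rewrite (SP _ _ _ _ h1 h2 h3 h4 h5 h6) /Adj /bt; lra.
have := core _ _ gK' hK' SP' _ _ _ xy yz; rewrite ltrN2 => /(_ gzx); rewrite /bt; lra.
Qed.

Lemma mono_or : {homo g : x y / x < y} \/ {homo g : x y /~ x < y}.
Proof.
have ginj : injective g := can_inj gK.
have T1 : forall a b c, a < b -> b < c -> (g a < g b) = (g a < g c).
  move=> a b c ab bc; have := btw _ _ _ ab bc; rewrite /bt => H.
  apply/idP/idP => HH; lra.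
have T2 : forall a b c, a < b -> b < c -> (g b < g c) = (g a < g c).
  move=> a b c ab bc; have := btw _ _ _ ab bc; rewrite /bt => H.
  apply/idP/idP => HH; lra.
have same : forall x y x' y', x < y -> x' < y' -> (g x < g y) = (g x' < g y').
  move=> x y x' y' xy xy'.
  pose M := Num.max y y' + 1.
  have m1 : y <= Num.max y y' by rewrite le_max lexx.
  have yM : y < M by rewrite /M; lra.
  have m2 : y' <= Num.max y y' by rewrite le_max lexx orbT.
  have yM' : y' < M by rewrite /M; lra.
  rewrite (T1 _ _ _ xy yM) (T1 _ _ _ xy' yM').
  have [xx|xx|->] := ltgtP x x'.
  - by rewrite (T2 _ _ _ xx (lt_trans xy' yM')).
  - by rewrite (T2 _ _ _ xx (lt_trans xy yM)).
  - by [].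
have [g01|g10] : g 0 < g 1 \/ g 1 < g 0.
  have : g 0 != g 1 by rewrite (inj_eq ginj) eq_sym oner_eq0.
  by rewrite neq_lt => /orP[]; [left|right].
- left => x y xy; by rewrite (same x y 0 1 xy ltr01).
- right => x y yx.
  have : g 0 < g 1 = false by apply/negbTE; rewrite -leNgt ltW.
  rewrite -(same y x 0 1 yx ltr01) => /negbT; rewrite -leNgt le_eqVlt => /orP[/eqP E|//].
  by move: yx; rewrite (ginj _ _ E) ltxx.
Qed.
End order2.

Lemma cont_of {R : realType} (g h : R -> R) (hK : cancel h g) :
  {homo g : x y / x < y} \/ {homo g : x y /~ x < y} -> continuous g.
Proof.
move=> [inc|dec] x.
- have gle : {mono g : x y / x <= y} := le_mono inc.
  have x12 : x - 1 < x + 1 by lra.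
  have xin : x \in `]x - 1, x + 1[ by rewrite in_itv /=; apply/andP; split; lra.
  have W : {within `[x - 1, x + 1], continuous g}.
    apply: segment_inc_surj_continuous.
      by move=> a b _ _; apply: gle.
    move=> v /=; rewrite in_itv /= => /andP[v1 v2]; exists (h v); last by rewrite hK.
    by rewrite in_itv /= -[x - 1 <= _]gle -[_ <= x + 1]gle hK v1 v2.
  exact: (within_continuous_continuous x12 W xin).
- have gle : {mono g : x y /~ x <= y} := le_nmono dec.
  have x12 : x - 1 < x + 1 by lra.
  have xin : x \in `]x - 1, x + 1[ by rewrite in_itv /=; apply/andP; split; lra.
  have W : {within `[x - 1, x + 1], continuous g}.
    apply: segment_dec_surj_continuous.
      by move=> a b _ _; apply: gle.
    move=> v /=; rewrite in_itv /= => /andP[v1 v2]; exists (h v); last by rewrite hK.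
    by rewrite in_itv /= -[x - 1 <= _]gle -[_ <= x + 1]gle hK v1 v2.
  exact: (within_continuous_continuous x12 W xin).
Qed.

Section K.
Context {R : realType} (P Q : probability R R) (a b c d : R).
Hypothesis (ab : a != b) (cd : c != d) (ac : a != c) (ad : a != d) (bc : b != c) (bd : b != d).
Hypothesis (PE : forall A, measurable A -> P A = (2^-1 * ((a \in A)%:R + (b \in A)%:R))%:E).
Hypothesis (QE : forall A, measurable A -> Q A = (2^-1 * ((c \in A)%:R + (d \in A)%:R))%:E).

Let ub (i : interval R) : nondeg_interval [set` i] ->
  (`| P [set` i] - Q [set` i] | <= kuiper P Q)%E.
Proof. by move=> ni; apply: ereal_sup_ubound; exists [set` i]. Qed.

Let hull (x y : R) (xy : x != y) (z : R) : z != x -> z != y -> ~ bt x y z ->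
  z \notin `[Num.min x y, Num.max x y].
Proof.
move=> zx zy nb; rewrite in_itv /=; apply/negP => /andP[h1 h2]; apply: nb.
move: zx zy h1 h2; case: (leP x y) => xy' zx zy h1 h2.
- left; split; rewrite lt_neqAle; [by rewrite eq_sym zx | by rewrite zy].
- right; split; rewrite lt_neqAle; [by rewrite eq_sym zy | by rewrite zx].
Qed.

Let nd (x y : R) (xy : x != y) : nondeg_interval [set` `[Num.min x y, Num.max x y]].
Proof.
exists `[Num.min x y, Num.max x y]; split => //; exists (Num.min x y), (Num.max x y).
have hlt : Num.min x y < Num.max x y.
  rewrite lt_max !gt_min; move: xy; rewrite neq_lt => /orP[->|->]; by rewrite ?orbT.
by split; [|split => //]; rewrite in_itv /= lexx ?andbT ?ltW.
Qed.

Let inhull (x y : R) : (x \in `[Num.min x y, Num.max x y]) && (y \in `[Num.min x y, Num.max x y]).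
Proof. by rewrite !in_itv /= ge_min le_max ge_min le_max !lexx !orbT. Qed.

Lemma kuiper_adj : Adj a b c d -> (1 <= kuiper P Q)%E.
Proof.
case=> [[nc nd']|[na nb]].
- apply: (le_trans _ (ub _ (nd _ _ ab))).
  rewrite PE ?QE; try exact: measurable_itv.
  have /andP[h1 h2] := inhull a b.
  rewrite !mem_setE h1 h2 (negbTE (hull _ _ ab _ _ _ nc)) ?(negbTE (hull _ _ ab _ _ _ nd')) //; last 2 first.
  - by rewrite eq_sym.
  - by rewrite eq_sym.
  - by rewrite -EFinB abse_EFin lee_fin /= ler_normr; apply/orP; left; lra.
  - by rewrite eq_sym.
  - by rewrite eq_sym.
- apply: (le_trans _ (ub _ (nd _ _ cd))).
  rewrite PE ?QE; try exact: measurable_itv.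
  have /andP[h1 h2] := inhull c d.
  rewrite !mem_setE h1 h2 (negbTE (hull _ _ cd _ _ _ na)) ?(negbTE (hull _ _ cd _ _ _ nb)) //.
  by rewrite -EFinB abse_EFin lee_fin /= ler_normr; apply/orP; right; lra.
Qed.
Let cv (i : interval R) x y z : x \in i -> y \in i -> bt x y z -> z \in i.
Proof.
move=> xi yi [[h1 h2]|[h1 h2]].
- have := @interval_is_interval R i x y xi yi z; rewrite (ltW h1) (ltW h2) => /(_ isT) //.
- have := @interval_is_interval R i y x yi xi z; rewrite (ltW h1) (ltW h2) => /(_ isT) //.
Qed.

Lemma kuiper_nadj : ~ Adj a b c d -> (kuiper P Q <= (2^-1)%:E)%E.
Proof.
move=> nA; apply: ge_ereal_sup => _ [I [i [-> _]] <-].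
rewrite PE ?QE; try exact: measurable_itv.
rewrite !mem_setE -EFinB abse_EFin lee_fin.
case Ha: (a \in i); case Hb: (b \in i); case Hc: (c \in i); case Hd: (d \in i);
  rewrite /= ?ler_norml; try (apply/andP; split; lra).
all: exfalso; apply: nA; first [ (right; split => hh;
    [ by move: (cv _ _ _ _ Hc Hd hh); rewrite ?Ha ?Hb
    | by move: (cv _ _ _ _ Hc Hd hh); rewrite ?Ha ?Hb ])
  | (left; split => hh;
    [ by move: (cv _ _ _ _ Ha Hb hh); rewrite ?Hc ?Hd
    | by move: (cv _ _ _ _ Ha Hb hh); rewrite ?Hc ?Hd ]) ].
Qed.
End K.


Theorem lemma3p4 (R : realType) (phi : probability R R -> probability R R)
  (f : R -> R) :
  (forall nu : probability R R, exists mu : probability R R, phi mu = nu) ->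
  (forall mu nu : probability R R, kuiper (phi mu) (phi nu) = kuiper mu nu) ->
  bijective f ->
  (forall (mu : probability R R) (x : R), phi mu [set f x] = mu [set x]) ->
  continuous f /\ exists g : R -> R, [/\ cancel f g, cancel g f & continuous g].
Proof.
move=> _ iso [g fK gK] hatom.
have finj : injective f := can_inj fK.
have ginj : injective g := can_inj gK.
have atom2 : forall x y : R, x != y -> forall A, measurable A ->
    phi (pm2 x y) A = (2^-1 * ((f x \in A)%:R + (f y \in A)%:R))%:E.
  move=> x y xy A mA; apply: atomsE => //.
  - by rewrite (inj_eq finj).
  - transitivity (pm2 x y [set x]); first exact: hatom.
    rewrite pm2E (_ : (x \in [set x]) = true); last by apply/mem_set.
    rewrite (_ : (y \in [set x]) = false); last by apply: memNset => /= yx'; move: xy; rewrite yx' eqxx.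
    by congr EFin; rewrite /=; field.
  - have yx : y != x by rewrite eq_sym.
    transitivity (pm2 x y [set y]); first exact: hatom.
    rewrite pm2E (_ : (y \in [set y]) = true); last by apply/mem_set.
    rewrite (_ : (x \in [set y]) = false); last by apply: memNset => /= yx'; move: xy; rewrite yx' eqxx.
    by congr EFin; rewrite /=; field.
have SPf : SepPres f.
  move=> a b c d ab cd ac ad bc bd.
  have K := iso (pm2 a b) (pm2 c d).
  have Pab := atom2 a b ab; have Pcd := atom2 c d cd.
  have fab : f a != f b by rewrite (inj_eq finj).
  have fcd : f c != f d by rewrite (inj_eq finj).
  have fac : f a != f c by rewrite (inj_eq finj).
  have fad : f a != f d by rewrite (inj_eq finj).
  have fbc : f b != f c by rewrite (inj_eq finj).
  have fbd : f b != f d by rewrite (inj_eq finj).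
  have half : ~ ((1 : \bar R) <= (2^-1)%:E)%E by rewrite lee_fin; lra.
  split => HA.
  - have [//|nA] := pselect (Adj (f a) (f b) (f c) (f d)); exfalso.
    have h1 := kuiper_adj (pm2 a b) (pm2 c d) a b c d ab cd ac ad bc bd (fun A _ => @pm2E _ a b A) (fun A _ => @pm2E _ c d A) HA.
    have h2 := kuiper_nadj (phi (pm2 a b)) (phi (pm2 c d)) (f a) (f b) (f c) (f d) Pab Pcd nA.
    rewrite K in h2; exact: half (le_trans h1 h2).
  - have [//|nA] := pselect (Adj a b c d); exfalso.
    have h1 := kuiper_adj (phi (pm2 a b)) (phi (pm2 c d)) (f a) (f b) (f c) (f d) fab fcd fac fad fbc fbd Pab Pcd HA.
    have h2 := kuiper_nadj (pm2 a b) (pm2 c d) a b c d (fun A _ => @pm2E _ a b A) (fun A _ => @pm2E _ c d A) nA.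
    rewrite -K in h2; exact: half (le_trans h1 h2).
have SPg : SepPres g.
  move=> a b c d ab cd ac ad bc bd.
  have := SPf (g a) (g b) (g c) (g d); rewrite !(inj_eq ginj) !gK => H.
  by case: (H ab cd ac ad bc bd) => H1 H2; split.
split; first exact: (cont_of _ _ gK (mono_or _ _ fK gK SPf)).
by exists g; split => //; exact: (cont_of _ _ fK (mono_or _ _ gK fK SPg)).
Qed.
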